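(* Let $n\geqslant 3$, $\mathbf{y}\in\mathbb{N}^n$ (positive integers), $1\leqslant r\leqslant n-1$ and $X\geqslant 1$. Then $$\#\mathcal{A}_r(\mathbf{y},X)=2^{n-r}\prod_{j=r+1}^n\frac{X}{d_1^{(j-1)}}+O\left(X^{n-r-1}\right),$$ with an implied constant independent of $\mathbf{y}$ and $X$.
   Context: Let $N=2^n-1$; for $h\in\{1,\dots,N\}$ write $h=\sum_{j=1}^n\varepsilon_j(h)2^{j-1}$, $\varepsilon_j(h)\in\{0,1\}$; $h\preceq\ell$ means $\varepsilon_j(h)\leqslant\varepsilon_j(\ell)$ for all $j$. There is a unique $N$-tuple $(z_h)$ of positive integers which is reduced (i.e. $\gcd(z_h,z_\ell)=1$ whenever $h,\ell$ are incomparable for $\preceq$) with $y_j=\prod_h z_h^{\varepsilon_j(h)}$ for all $j$; fix it. Put $d_i=\prod_{h}z_h^{1-\varepsilon_i(h)}$ for $1\leqslant i\leqslant n$; $d_{1,r}=\prod_{h:\ \varepsilon_1(h)=\cdots=\varepsilon_r(h)=0}z_h$ for $1\leqslant r\leqslant n$ (so $d_{1,1}=d_1$); and for $2\leqslant r\leqslant n$, $d_1^{(r-1)}=\prod_{h:\ \varepsilon_1(h)=\cdots=\varepsilon_{r-1}(h)=0,\ \varepsilon_r(h)=1}z_h$. Finally $$\mathcal{A}_r(\mathbf{y},X)=\Big\{(\alpha_{r+1},\dots,\alpha_n)\in\mathbb{Z}^{n-r}:\ \max_{r+1\leqslant i\leqslant n}|\alpha_i|\leqslant X,\ \sum_{i=r+1}^n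 d_i\alpha_i\equiv 0 \pmod{d_{1,r}}\Big\}.$$ *)

(* Defs.v *)
From HB Require Import structures.
From mathcomp Require Import all_boot all_order all_algebra.
From mathcomp Require Import reals.
Set Implicit Arguments. Unset Strict Implicit. Unset Printing Implicit Defensive.
Import Order.TTheory GRing.Theory Num.Theory.

(* eps j h = epsilon_j(h), the (j-1)-th binary digit of h (j is 1-indexed). *)
Definition eps (j h : nat) : bool := odd (h %/ 2 ^ j.-1).

Definition prec (n h l : nat) : bool := [forall j : 'I_n, eps j.+1 h <= eps j.+1 l].

Definition reduced (n : nat) (z : nat -> nat) : Prop :=
  forall h l, 1 <= h < 2 ^ n -> 1 <= l < 2 ^ n ->
    ~~ prec n h l -> ~~ prec n l h -> coprime (z h) (z l).

Definition factors (n : nat) (y z : nat -> nat) : Prop :=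
  forall j, 1 <= j <= n -> y j = \prod_(1 <= h < 2 ^ n) z h ^ eps j h.

Definition dd (n : nat) (z : nat -> nat) (i : nat) : nat :=
  \prod_(1 <= h < 2 ^ n) z h ^ (1 - eps i h).

Definition d1r (n : nat) (z : nat -> nat) (r : nat) : nat :=
  \prod_(1 <= h < 2 ^ n | [forall j : 'I_r, ~~ eps j.+1 h]) z h.

Definition d1sup (n : nat) (z : nat -> nat) (m : nat) : nat :=
  \prod_(1 <= h < 2 ^ n | [forall j : 'I_m, ~~ eps j.+1 h] && eps m.+1 h) z h.

(* #A_r(y, X): tuples (alpha_{r+1},...,alpha_n) in Z^{n-r}, alpha_{r+1+k} = alpha k,
   with max |alpha_i| <= X and sum_i d_i alpha_i = 0 mod d_{1,r}.
   They are enumerated inside the box [-B, B]^{n-r}, B = floor X, which contains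
   every integer alpha with |alpha| <= X; the condition |alpha_i| <= X is still
   imposed literally. *)
Definition countA (R : realType) (n : nat) (z : nat -> nat) (r : nat) (X : R) : nat :=
  let B := Num.truncn X in
  #|[set a : {ffun 'I_(n - r) -> 'I_(2 * B + 1)} |
      [forall k, ((`|(a k)%:Z - B%:Z|%R)%:~R <= X)%R] &&
      ((d1r n z r)%:Z %| (\sum_(k < n - r)
          ((dd n z (r + 1 + k))%:Z * ((a k)%:Z - B%:Z)))%R)%Z]|.

(* Main.v *)
Require Import Defs.
From HB Require Import structures.
From mathcomp Require Import all_boot all_order all_algebra.
From mathcomp Require Import reals.
From mathcomp Require Import zify ring lra.
Import Order.TTheory GRing.Theory Num.Theory.
Set Implicit Arguments. Unset Strict Implicit. Unset Printing Implicit Defensive.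

Definition ext (T : finType) k (g : {ffun 'I_k -> T}) (x : T) : {ffun 'I_k.+1 -> T} :=
  [ffun i : 'I_k.+1 => if unlift ord_max i is Some j then g j else x].

Definition restr (T : finType) k (f : {ffun 'I_k.+1 -> T}) : {ffun 'I_k -> T} :=
  [ffun j => f (lift ord_max j)].

Lemma ext_lift (T : finType) k g x (j : 'I_k) : @ext T k g x (lift ord_max j) = g j.
Proof. by rewrite ffunE liftK. Qed.

Lemma ext_max (T : finType) k g x : @ext T k g x ord_max = x.
Proof. by rewrite ffunE unlift_none. Qed.

Lemma sum_ffunS (T : finType) k (F : {ffun 'I_k.+1 -> T} -> nat) :
  (\sum_f F f = \sum_(g : {ffun 'I_k -> T}) \sum_(x : T) F (ext g x))%N.
Proof.
rewrite pair_big /=.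
rewrite (reindex (fun p : {ffun 'I_k -> T} * T => ext p.1 p.2)) //=.
exists (fun f => (restr f, f ord_max)) => [[g x] _ | f _] /=.
  congr pair; last by rewrite ext_max.
  by apply/ffunP => j; rewrite ffunE ext_lift.
apply/ffunP => i; rewrite ffunE; case: unliftP => [j ->|->] //.
by rewrite ffunE.
Qed.
Definition Lc (m y0 N : nat) : nat := \sum_(0 <= x < N) (x %% m == y0 : nat).

Lemma Lc_block m y0 q : 0 < m -> y0 < m -> Lc m y0 (q * m) = q.
Proof.
move=> m0 ym; elim: q => [|q IH]; first by rewrite /Lc mul0n big_geq.
rewrite /Lc mulSn addnC (big_cat_nat (n:=q * m)) //=; last by rewrite leq_addr.
rewrite -/(Lc m y0 (q * m)) IH -{1}(add0n (q * m)) big_addn.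
rewrite addKn big_mkord.
rewrite (eq_bigr (fun i : 'I_m => (i == y0 :> nat : nat))); last first.
  by move=> i _; rewrite addnC modnMDl modn_small.
rewrite (bigD1 (Ordinal ym)) //= eqxx big1 ?addn0 ?addn1 //.
by move=> i /negbTE; rewrite -val_eqE /= => ->.
Qed.

Lemma Lc_mono m y0 N1 N2 : N1 <= N2 -> Lc m y0 N1 <= Lc m y0 N2.
Proof.
by move=> h; rewrite /Lc (big_cat_nat (n:=N1) _ h) //= leq_addr.
Qed.

Lemma Lc_bounds m y0 N : 0 < m -> y0 < m ->
  N %/ m <= Lc m y0 N <= (N %/ m).+1.
Proof.
move=> m0 ym; apply/andP; split.
  rewrite -{1}(Lc_block (N %/ m) m0 ym); apply: Lc_mono; exact: leq_divM.
rewrite -[X in _ <= X](Lc_block (N %/ m).+1 m0 ym); apply: Lc_mono.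
by apply: ltnW; apply: ltn_ceil.
Qed.

Lemma bits0 n h : h < 2 ^ n -> (forall j : 'I_n, ~~ eps j.+1 h) -> h = 0.
Proof.
elim: n h => [|n IH] h hlt hb; first by move: hlt; rewrite expn0 ltnS leqn0 => /eqP.
have h0 : ~~ odd h by have := hb ord0; rewrite /eps /= expn0 divn1.
have h' : h %/ 2 = 0.
  apply: IH.
    by rewrite ltn_divLR // -expnSr.
  move=> j; have := hb (lift ord0 j); rewrite /eps /= -divnMA -expnS.
  by [].
by have := divn_eq h 2; rewrite h' modn2 (negbTE h0).
Qed.

Lemma bit_exists n h : 0 < h < 2 ^ n -> exists j : 'I_n, eps j.+1 h.
Proof.
move=> /andP[h0 hlt].
case: (boolP [exists j : 'I_n, eps j.+1 h]) => [/existsP //|/existsPn hn].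
by move: h0; rewrite (bits0 hlt hn).
Qed.

Lemma forall_splitS m h :
  [forall j : 'I_m.+1, ~~ eps j.+1 h] = [forall j : 'I_m, ~~ eps j.+1 h] && ~~ eps m.+1 h.
Proof.
apply/forallP/andP => [H|[/forallP H1 H2] j].
  split; last by have := H ord_max.
  by apply/forallP => j; have := H (widen_ord (leqnSn m) j).
have := ltn_ord j; rewrite ltnS leq_eqVlt => /orP[/eqP -> //|jm].
exact: (H1 (Ordinal jm)).
Qed.

Lemma d1r_split n z m : d1r n z m = d1sup n z m * d1r n z m.+1.
Proof.
rewrite /d1r /d1sup (bigID (fun h => eps m.+1 h)) /=; congr (_ * _).
by apply: eq_bigl => h; rewrite forall_splitS.
Qed.

Lemma d1r_n n z : d1r n z n = 1.
Proof.
rewrite /d1r big_nat_cond big1 // => h /andP[/andP[h1 h2] /forallP H].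
have [j hj] : exists j : 'I_n, eps j.+1 h by apply: bit_exists; rewrite h1 h2.
by move: (H j); rewrite hj.
Qed.

Lemma d1r_prod n z r : r <= n ->
  d1r n z r = \prod_(r.+1 <= j < n.+1) d1sup n z j.-1.
Proof.
move=> rn; have [k ek] : exists k, n = r + k by exists (n - r); lia.
elim: k r rn ek => [|k IH] r rn ek.
  by rewrite ek addn0 big_geq // d1r_n.
rewrite big_ltn; last lia.
by rewrite d1r_split /= (IH r.+1) //; lia.
Qed.

Fixpoint G (k : nat) (c : nat -> nat) (D : nat) : nat :=
  if k is k'.+1 then G k' c (gcdn (c k') D) else D.

Lemma prime_dvd_prod_ex p (I : eqType) (s : seq I) (P : pred I) f : prime p ->
  p %| \prod_(i <- s | P i) f i -> exists2 i, i \in s & P i && (p %| f i).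
Proof.
move=> pp; rewrite Euclid_dvd_prod // big_has_cond => /hasP[i si /andP[Pi hi]].
by exists i => //; rewrite Pi.
Qed.

Definition pc n h := \sum_(j < n) (eps j.+1 h : nat).

Lemma chain_step n z r p : prime p -> reduced n z -> r <= n ->
  (forall i, r < i <= n -> p %| dd n z i) ->
  forall h, 0 < h < 2 ^ n -> [forall j : 'I_r, ~~ eps j.+1 h] -> p %| z h ->
  exists h1, [/\ 0 < h1 < 2 ^ n, [forall j : 'I_r, ~~ eps j.+1 h1], p %| z h1
              & pc n h1 < pc n h].
Proof.
move=> pp red rn Hdd h hr hfr hz.
have [j hj] := bit_exists hr.
have jr : r < j.+1.
  rewrite ltnS leqNgt; apply/negP => jr.
  by move/forallP: hfr => /(_ (Ordinal jr)) /=; rewrite hj.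
have := Hdd j.+1; rewrite jr ltn_ord => /(_ isT).
rewrite /dd -big_filter => /(prime_dvd_prod_ex pp) [h1].
rewrite mem_filter => /andP[_ h1r] /andP[_ hz1].
rewrite mem_index_iota in h1r.
have e1 : eps j.+1 h1 = false.
  apply/negP => e1; move: hz1; rewrite e1 subnn expn0 dvdn1 => /eqP p1.
  by move: pp; rewrite p1.
have hz1' : p %| z h1.
  by move: hz1; rewrite e1 subn0 expn1.
have hr1 : 0 < h1 < 2 ^ n by move: h1r; case/andP => a b; rewrite b andbT.
have : prec n h h1 || prec n h1 h.
  case: (boolP (prec n h h1)) => //= n1; case: (boolP (prec n h1 h)) => //= n2; exfalso.
  have cop := red h h1 hr h1r n1 n2.
  have : p %| gcdn (z h) (z h1) by rewrite dvdn_gcd hz hz1'.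
  by rewrite (eqP cop) dvdn1 => /eqP p1; move: pp; rewrite p1.
case/orP => [/forallP /(_ j)|/forallP hp]; first by rewrite hj e1.
exists h1; split => //.
  apply/forallP => j'; have := hp (widen_ord rn j'); rewrite /=.
  move/forallP: hfr => /(_ j').
  by case: (eps _ h1); case: (eps _ h).
rewrite /pc (bigD1 j) //= [X in _ < X](bigD1 j) //= hj e1 add0n add1n ltnS.
by apply: leq_sum => i _; exact: hp i.
Qed.

Lemma chain n z r p : prime p -> reduced n z -> r <= n ->
  p %| d1r n z r -> (forall i, r < i <= n -> p %| dd n z i) -> False.
Proof.
move=> pp red rn hD Hdd.
move: hD; rewrite /d1r -big_filter => /(prime_dvd_prod_ex pp) [h].
rewrite mem_filter mem_index_iota => /andP[hP hr] /andP[_ hz].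
have : pc n h <= pc n h by [].
move: {2}(pc n h) => m; elim: m h hP hr hz => [|m IH] h hP hr hz hm.
  have [h1 [_ _ _ lt]] := chain_step pp red rn Hdd hr hP hz.
  by move: lt; rewrite ltnNge (leq_trans hm).
have [h1 [h1r h1P h1z lt]] := chain_step pp red rn Hdd hr hP hz.
by apply: (IH h1 h1P h1r h1z); rewrite -ltnS (leq_trans lt hm).
Qed.

Lemma G_dvdD k c D : G k c D %| D.
Proof.
elim: k D => [|k IH] D //=.
by apply: dvdn_trans (IH _) (dvdn_gcdr _ _).
Qed.

Lemma G_dvdc k c D i : i < k -> G k c D %| c i.
Proof.
elim: k D => [|k IH] D //= ik.
move: ik; rewrite ltnS leq_eqVlt => /orP[/eqP ->|ik]; last exact: IH.
by apply: dvdn_trans (G_dvdD _ _ _) (dvdn_gcdl _ _).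
Qed.

Lemma G_gt0 k c D : 0 < D -> 0 < G k c D.
Proof.
elim: k D => [|k IH] D //= D0.
by apply: IH; rewrite gcdn_gt0 D0 orbT.
Qed.

Lemma G_one n z r : reduced n z -> r <= n -> 0 < d1r n z r ->
  G (n - r) (fun i => dd n z (r + 1 + i)) (d1r n z r) = 1.
Proof.
move=> red rn D0.
set g := G _ _ _.
have g0 : 0 < g by apply: G_gt0.
case: (ltngtP g 1) => // [|g1]; first by rewrite ltnS leqn0 (gtn_eqF g0).
have pp := pdiv_prime g1.
have pg := pdiv_dvd g.
exfalso; apply: (chain pp red rn).
  exact: dvdn_trans pg (G_dvdD _ _ _).
move=> i /andP[ri iN].
have := @G_dvdc (n - r) (fun i => dd n z (r + 1 + i)) (d1r n z r) (i - r - 1).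
have -> : r + 1 + (i - r - 1) = i by lia.
move=> /(_ ltac:(lia)) gi.
exact: dvdn_trans pg gi.
Qed.

Local Open Scope ring_scope.

Lemma char_lin (B D a : nat) (w : int) : (0 < D)%N -> ((gcdn a D)%:Z %| w)%Z ->
  exists2 y0, (y0 < D %/ gcdn a D)%N & forall x : nat,
    (D%:Z %| w - a%:Z * (x%:Z - B%:Z))%Z = (x %% (D %/ gcdn a D) == y0)%N.
Proof.
move=> D0 ew.
set e := gcdn a D.
have e0 : (0 < e)%N by rewrite gcdn_gt0 D0 orbT.
have ez : e%:Z != 0 by rewrite eqz_nat -lt0n.
set m := (D %/ e)%N.
set a' := (a %/ e)%N.
have Da : a = (a' * e)%N by rewrite divnK // dvdn_gcdl.
have DD : D = (m * e)%N by rewrite divnK // dvdn_gcdr.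
have m0 : (0 < m)%N by move: D0; rewrite DD muln_gt0 => /andP[].
have mz : m%:Z != 0 by rewrite eqz_nat -lt0n.
have [w' Dw] := dvdzP ew.
have [u [v Huv]] := Bezoutz a D.
have Huv' : u * a'%:Z + v * m%:Z = 1.
  apply: (@mulIf _ e%:Z) => //.
  rewrite mul1r -[X in _ = X]Huv /gcdz /= -/e.

  by rewrite [in RHS]Da [in RHS]DD !PoszM mulrDl !mulrA.
have cop : coprimez m%:Z a'%:Z.
  by apply/coprimezP; exists (v, u) => /=; rewrite addrC.
set z := B%:Z + u * w'.
exists `|(z %% m%:Z)%Z|%N.
  by rewrite -ltz_nat gez0_abs ?modz_ge0 // ltz_pmod // ltz_nat.
move=> x.
have -> : (D%:Z %| w - a%:Z * (x%:Z - B%:Z))%Z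
   = ((m%:Z * e%:Z) %| (w' - a'%:Z * (x%:Z - B%:Z)) * e%:Z)%Z.
  rewrite Dw -/e {1}DD PoszM; congr (_ %| _)%Z.
  rewrite Da PoszM; ring.
rewrite dvdz_mul2r //.
have -> : w' - a'%:Z * (x%:Z - B%:Z)
          = a'%:Z * (u * w' - (x%:Z - B%:Z)) + (w' * v) * m%:Z.
  rewrite -[X in X - _ = _]mul1r -Huv'; ring.
rewrite rpredDr; last by apply: dvdz_mull.
rewrite Gauss_dvdzr //.
have -> : u * w' - (x%:Z - B%:Z) = - (x%:Z - z) by rewrite /z; ring.
rewrite rpredN -eqz_mod_dvd modz_nat.
have zm : (z %% m%:Z)%Z = `|(z %% m%:Z)%Z|%N%:Z by rewrite gez0_abs ?modz_ge0.
by rewrite zm eqz_nat.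
Qed.
Lemma real_est (R : realFieldType) (L m N X : R) : 1 <= m ->
  L * m <= N + m -> N < L * m + m -> N <= 2 * X + 1 -> 2 * X <= N + 1 ->
  `|L - 2 * X / m| <= 2.
Proof.
move=> m1 h1 h2 h3 h4.
have m0 : 0 < m by lra.
have -> : L - 2 * X / m = (L * m - 2 * X) / m by field; lra.
rewrite normrM (gtr0_norm (x:=m^-1)) ?invr_gt0 // -/(_ / m) ler_pdivrMr // ler_norml; apply/andP; split; lra.
Qed.

Definition L1 (B D a : nat) (w : int) : nat :=
  (\sum_(x : 'I_(2 * B + 1)) ((D%:Z %| (w - a%:Z * ((x : nat)%:Z - B%:Z))%R)%Z : nat))%N.

Lemma one_dim_0 B D a w : ~~ ((gcdn a D)%:Z %| w)%Z -> L1 B D a w = 0%N.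
Proof.
move=> ew; rewrite /L1 big1 // => x _.
case h: (_ %| _)%Z => //; move: ew; apply: contraNeq => _.
have -> : w = (w - a%:Z * ((x : nat)%:Z - B%:Z)) + a%:Z * ((x : nat)%:Z - B%:Z) by ring.
rewrite rpredD //; first by apply: dvdz_trans h; apply: dvdn_gcdr.
by apply: dvdz_mulr; apply: dvdn_gcdl.
Qed.

Lemma one_dim_1 (R : realFieldType) (X : R) B D a w : (0 < D)%N ->
  ((gcdn a D)%:Z %| w)%Z -> B%:R <= X -> X < B.+1%:R ->
  `|(L1 B D a w)%:R - 2 * X * (gcdn a D)%:R / D%:R| <= 2.
Proof.
move=> D0 ew hB1 hB2.
have [y0 y0m Hy] := char_lin B D0 ew.
set e := gcdn a D in y0m Hy *.
have e0 : (0 < e)%N by rewrite gcdn_gt0 D0 orbT.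
set m := (D %/ e)%N in y0m Hy *.
have DD : D = (m * e)%N by rewrite divnK // dvdn_gcdr.
have m0 : (0 < m)%N by move: D0; rewrite DD muln_gt0 => /andP[].
have -> : L1 B D a w = Lc m y0 (2 * B + 1).
  by rewrite /L1 /Lc big_mkord; apply: eq_bigr => x _; rewrite Hy.
have := Lc_bounds (2 * B + 1) m0 y0m.
set L := Lc _ _ _; set N := (2 * B + 1)%N; set q := (N %/ m)%N => /andP[hq1 hq2].
have hN1 : (q * m <= N)%N by apply: leq_divM.
have hN2 : (N < q.+1 * m)%N by apply: ltn_ceil.
have f1 : (L * m <= N + m)%N by nia.
have f2 : (N < L * m + m)%N by nia.
have -> : 2 * X * e%:R / D%:R = 2 * X / m%:R.
  clearbody m; rewrite DD natrM; field.
  by rewrite !pnatr_eq0 -!lt0n m0 e0.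
apply: (real_est (N := N%:R)).
- by rewrite ler1n.
- by rewrite -natrM -natrD ler_nat.
- by rewrite -natrM -natrD ltr_nat.
- rewrite /N natrD natrM; lra.
- rewrite /N natrD natrM; move: hB2; rewrite -addn1 natrD; lra.
Qed.

Definition Sk (B k : nat) (c : nat -> nat) (f : {ffun 'I_k -> 'I_(2 * B + 1)}) : int :=
  \sum_(i < k) (c i)%:Z * ((f i : nat)%:Z - B%:Z).

Definition Nk (B k : nat) (c : nat -> nat) (D : nat) (t : int) : nat :=
  (\sum_(f : {ffun 'I_k -> 'I_(2 * B + 1)}) ((D%:Z %| (Sk c f - t)%R)%Z : nat))%N.


Lemma Nk_step B k c D t :
  Nk B k.+1 c D t = (\sum_(g : {ffun 'I_k -> 'I_(2 * B + 1)}) L1 B D (c k) (t - Sk c g))%N.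
Proof.
rewrite /Nk sum_ffunS; apply: eq_bigr => g _; rewrite /L1; apply: eq_bigr => x _.
rewrite /Sk big_ord_recr /= ext_max.
rewrite (eq_bigr (fun i : 'I_k => (c i)%:Z * ((g i : nat)%:Z - B%:Z))); last first.
  move=> i _; congr (_ * (_ - _)); congr (_ %:Z); rewrite -(ext_lift g x); congr (nat_of_ord (ext g x _)).
  by apply: val_inj; rewrite /= /bump leqNgt ltn_ord.
rewrite !dvdzE; congr (_ %| _)%N; rewrite -abszN; congr absz; ring.
Qed.

Lemma Nk0 B c D t : Nk B 0 c D t = (D%:Z %| t)%Z.
Proof.
rewrite /Nk (eq_bigr (fun _ => ((D%:Z %| t)%Z : nat))); last first.
  by move=> f _; rewrite /Sk big_ord0 sub0r !dvdzE abszN.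
by rewrite sum_nat_const card_ffun (card_ord 0) expn0 mul1n.
Qed.

Lemma est (R : realFieldType) (X : R) B : 1 <= X -> B%:R <= X -> X < B.+1%:R ->
  forall k c D t, (0 < D)%N ->
  `|(Nk B k c D t)%:R - (((G k c D)%:Z %| t)%Z : nat)%:R * (G k c D)%:R * (2 * X) ^+ k / D%:R|
    <= 5%:R ^+ k * X ^+ k / X.
Proof.
move=> X1 hB1 hB2; elim=> [|k IH] c D t D0.
  rewrite Nk0 /= expr0 mulr1 mulfK ?pnatr_eq0 -?lt0n // subrr normr0.
  by apply: divr_ge0; rewrite ?expr0 ?mulr1; lra.
have e0 : (0 < gcdn (c k) D)%N by rewrite gcdn_gt0 D0 orbT.
have eD : (gcdn (c k) D <= D)%N by apply: dvdn_leq => //; apply: dvdn_gcdr.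
have IHe := IH c (gcdn (c k) D) t e0.
rewrite /= Nk_step natr_sum.
move: IHe e0 eD.
set e := gcdn (c k) D; set g := G k c e => IHe e0 eD.
have H0 : forall w, ~~ (e%:Z %| w)%Z -> L1 B D (c k) w = 0%N.
  by move=> w; apply: one_dim_0.
have H1 : forall w, (e%:Z %| w)%Z ->
    `|(L1 B D (c k) w)%:R - 2 * X * e%:R / D%:R| <= 2.
  by move=> w h; apply: one_dim_1.
clearbody g.
have HN : (Nk B k c e t)%:R = \sum_(f : {ffun 'I_k -> 'I_(2 * B + 1)})
    (((e%:Z %| t - Sk c f)%Z : nat)%:R : R).
  rewrite /Nk natr_sum; apply: eq_bigr => f _; congr (_%:R); congr nat_of_bool.
  by rewrite !dvdzE -(abszN (t - Sk c f)) opprB.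
have Hdec : \sum_(f : {ffun 'I_k -> 'I_(2 * B + 1)}) ((L1 B D (c k) (t - Sk c f))%:R : R)
   = \sum_(f : {ffun 'I_k -> 'I_(2 * B + 1)}) ((L1 B D (c k) (t - Sk c f))%:R
         - ((e%:Z %| t - Sk c f)%Z : nat)%:R * (2 * X * e%:R / D%:R))
     + (2 * X * e%:R / D%:R) * (Nk B k c e t)%:R.
  by rewrite HN sumrB -mulr_suml; ring.
rewrite Hdec; clear Hdec HN.
have eR : (e%:R : R) != 0 by rewrite pnatr_eq0 -lt0n.
have DR : (D%:R : R) != 0 by rewrite pnatr_eq0 -lt0n.
have -> : ((g%:Z %| t)%Z : nat)%:R * g%:R * (2 * X) ^+ k.+1 / D%:R
    = (2 * X * e%:R / D%:R) * (((g%:Z %| t)%Z : nat)%:R * g%:R * (2 * X) ^+ k / e%:R).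
  by rewrite exprS; field; rewrite eR DR.
set rho := 2 * X * e%:R / D%:R.
set Mk := _ * _ * (2 * X) ^+ k / e%:R.
set Th := \sum_(f : {ffun 'I_k -> 'I_(2 * B + 1)}) _.
have -> : Th + rho * (Nk B k c e t)%:R - rho * Mk = Th + rho * ((Nk B k c e t)%:R - Mk).
  by rewrite mulrBr addrA.
apply: le_trans (ler_normD _ _) _.
have rho0 : 0 <= rho by rewrite /rho; apply: divr_ge0; rewrite ?mulr_ge0 //; lra.
have rho2 : rho <= 2 * X.
  have -> : rho = (2 * X) * (e%:R / D%:R) by rewrite /rho mulrA.
  apply: ler_piMr; first lra.
  by rewrite ler_pdivrMr ?ltr0n // mul1r ler_nat.
have HB : `|Th| <= 2 * (3 * X) ^+ k.
  apply: le_trans (ler_norm_sum _ _ _) _.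
  apply: (@le_trans _ _ (\sum_(f : {ffun 'I_k -> 'I_(2 * B + 1)}) (2 : R))).
    apply: ler_sum => f _.
    case: (boolP (e%:Z %| t - Sk c f)%Z) => h.
      by rewrite mul1r; apply: H1.
    by rewrite (H0 _ h) mul0r subr0 normr0.
  rewrite sumr_const card_ffun (card_ord k) card_ord -(mulr_natr (2 : R) ((2 * B + 1) ^ k)) natrX.
  rewrite ler_pM2l ?ltr0n //; apply: lerXn2r; rewrite ?nnegrE ?ler0n //.
    by apply: mulr_ge0 => //; lra.
  rewrite natrD natrM; lra.
have HR : `|rho * ((Nk B k c e t)%:R - Mk)| <= 2 * X * (5%:R ^+ k * X ^+ k / X).
  rewrite normrM ger0_norm //; apply: ler_pM => //; exact: normr_ge0.
apply: le_trans (lerD HB HR) _.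
have X0 : X != 0 by apply/eqP => hX; move: X1; rewrite hX; lra.
have -> : 2 * X * (5%:R ^+ k * X ^+ k / X) = 2 * 5%:R ^+ k * X ^+ k by field.
have -> : (5%:R : R) ^+ k.+1 * X ^+ k.+1 / X = 5 * 5%:R ^+ k * X ^+ k.
  by rewrite !exprS; field.
rewrite exprMn.
have h35 : (3%:R : R) ^+ k <= 5%:R ^+ k by apply: lerXn2r; rewrite ?nnegrE ?ler0n ?ler_nat.
have hP : 0 <= X ^+ k by apply: exprn_ge0; lra.
have h3 : 0 <= (3%:R : R) ^+ k by apply: exprn_ge0.
nra.
Qed.


Lemma countA_Nk (R : realType) n z r (X : R) : 1 <= X ->
  countA n z r X = Nk (Num.truncn X) (n - r) (fun i => dd n z (r + 1 + i)) (d1r n z r) 0.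
Proof.
move=> X1; rewrite /countA /Nk /=.
set B := Num.truncn X.
have hB1 : B%:R <= X by rewrite truncn_le; lra.
rewrite -sum1_card big_mkcond /=; apply: eq_bigr => f _; rewrite inE subr0.
have -> : [forall k, ((`|(f k : nat)%:Z - B%:Z|)%:~R <= X)] = true.
  apply/forallP => i; apply: le_trans hB1.
  have hi := ltn_ord (f i).
  have : `|(f i : nat)%:Z - B%:Z| <= B%:Z.
    rewrite ler_norml; apply/andP; split; lia.
  by rewrite -(ler_int R); apply.
by [].
Qed.

Theorem mainTheorem3 (R : realType) (n : nat) (hn : (3 <= n)%N) (r : nat)
    (hr : (1 <= r <= n - 1)%N) :
  exists C : R, forall (y z : nat -> nat) (X : R),
    (forall j, (1 <= j <= n)%N -> (0 < y j)%N) ->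
    (forall h, (1 <= h < 2 ^ n)%N -> (0 < z h)%N) ->
    reduced n z -> factors n y z ->
    1 <= X ->
    `| (countA n z r X)%:R
       - 2 ^+ (n - r) * \prod_(r.+1 <= j < n.+1) (X / (d1sup n z j.-1)%:R) |
      <= C * X ^+ (n - r - 1).
Proof.
exists (5%:R ^+ (n - r)) => y z X _ zpos red _ X1.
have rn : (r <= n)%N by lia.
have D0 : (0 < d1r n z r)%N.
  rewrite /d1r big_nat_cond; apply: prodn_cond_gt0 => h /andP[h1 _]; exact: zpos.
set B := Num.truncn X.
have hB1 : B%:R <= X by rewrite truncn_le; lra.
have hB2 : X < B.+1%:R by apply: truncnS_gt.
have := est X1 hB1 hB2 (n - r) (fun i => dd n z (r + 1 + i)) 0 D0.
rewrite G_one // dvd1z /= -countA_Nk //.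
have -> : 2 ^+ (n - r) * \prod_(r.+1 <= j < n.+1) (X / (d1sup n z j.-1)%:R)
    = (2 * X) ^+ (n - r) / (d1r n z r)%:R.
  rewrite big_split /= prodr_const_nat subSS prodfV -natr_prod -d1r_prod //.
  by rewrite exprMn mulrA.
move=> h; rewrite ?mulr1n ?mul1r in h.
apply: (@le_trans _ _ (5%:R ^+ (n - r) * X ^+ (n - r) / X)); first exact: h.
Show.
have X0 : X != 0 by apply/eqP => hX; move: X1; rewrite hX; lra.
have -> : X ^+ (n - r) = X * X ^+ (n - r - 1).
  by rewrite -exprS; congr (_ ^+ _); lia.
by rewrite [X * _]mulrC mulrA mulfK.
Qed.
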